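(* Let $S'\le S$ be finite $p$-groups, $\mathcal{F}_1$ a fusion system over $S$, $\mathcal{F}_2,\mathcal{F}_e$ fusion systems over $S'$ with $\mathcal{F}_e\subseteq\mathcal{F}_1\cap\mathcal{F}_2$, $\mathcal{F}=\langle\mathcal{F}_1,\mathcal{F}_2\rangle_S$, $\Lambda=\{\mathcal{F}_1,\mathcal{F}_2,\mathcal{F}_e\}$, and $\mathcal{C}$ a family of subgroups of $S$ containing $S'$ and closed under $\mathcal{F}$-conjugation and overgroups. Let $P\in\mathcal{C}$ and assume that for every $Q\cong_{\mathcal{F}}P$, $\operatorname{Hom}_{\mathcal{F}_e}(Q,S')=\operatorname{Hom}_{\mathcal{F}_1}(Q,S')\cap\operatorname{Hom}_{\mathcal{F}_2}(Q,S')$, and that either (1) $\operatorname{Hom}_{\mathcal{F}}(P,S')=\operatorname{Hom}_{\mathcal{H}}(P,S')$ for some $\mathcal{H}\in\{\mathcal{F}_1,\mathcal{F}_2\}$, or (2) $\operatorname{Aut}_{\mathcal{F}}(P)=\operatorname{Aut}_{\mathcal{F}_2}(P)$ and, for every $Q$ with $Q\cong_{\mathcal{F}}P$ but $Q\not\cong_{\mathcal{F}_e}P$, $\operatorname{Hom}_{\mathcal{F}_e}(Q,S')=\operatorname{Hom}_{\mathcal{F}_2}(Q,S')$. Then the graph $\operatorname{Rep}_{\mathcal{F}}(P,\Lambda)$ is a tree. In particular $H_1(\operatorname{Rep}_{\mathcal{F}}(P,\Lambda);\mathcal{R})=0$ for every commutative ring $\mathcal{R}$.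
   Context: $\langle\mathcal{F}_1,\mathcal{F}_2\rangle_S$ is the smallest fusion system over $S$ containing both. For a fusion system $\mathcal{H}$ over $S_{\mathcal{H}}$ ($S_{\mathcal{F}_1}=S$, $S_{\mathcal{F}_2}=S_{\mathcal{F}_e}=S'$), $\operatorname{Rep}_{\mathcal{F}}(P,\mathcal{H})=\operatorname{Hom}_{\mathcal{F}}(P,S_{\mathcal{H}})/\sim$ where $\varphi\sim\psi$ iff there is an $\mathcal{H}$-isomorphism $\theta:\varphi(P)\to\psi(P)$ with $\theta\varphi=\psi$. $\operatorname{Rep}_{\mathcal{F}}(P,\Lambda)$ is the bipartite graph with vertex set $\operatorname{Rep}_{\mathcal{F}}(P,\mathcal{F}_1)\sqcup\operatorname{Rep}_{\mathcal{F}}(P,\mathcal{F}_2)$ and edge set $\operatorname{Rep}_{\mathcal{F}}(P,\mathcal{F}_e)$, the edge $[\varphi]_{\mathcal{F}_e}$ joining $[\varphi]_{\mathcal{F}_2}$ and $[\iota_{S'}^S\varphi]_{\mathcal{F}_1}$. *)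

(* Defs.v *)
From mathcomp Require Import all_boot all_order all_algebra all_fingroup all_solvable.
Set Implicit Arguments. Unset Strict Implicit. Unset Printing Implicit Defensive.
Import GRing.Theory.

(* A fusion system is encoded by a boolean predicate  F P f  meaning:        *)
(*   "the restriction of f to P is a morphism in Hom_F(P, S)".               *)
(* Morphisms are represented by finite functions gT -> gT; only their        *)
(* values on P matter (axiom fs_ext).                                        *)

Section Fusion.
Variable gT : finGroupType.

Definition fsys := {set gT} -> {ffun gT -> gT} -> bool.

Definition conjf (s : gT) : {ffun gT -> gT} := [ffun x : gT => (x ^ s)%g].
Definition compf (g f : {ffun gT -> gT}) : {ffun gT -> gT} := [ffun x => g (f x)].

Definition is_fusion_system (S : {set gT}) (F : fsys) : Prop :=
  [/\
      (forall P f, F P f ->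
         [/\ group_set P, P \subset S, {in P &, {morph f : x y / (x * y)%g}},
             {in P &, injective f} & f @: P \subset S]),
      (forall P (f g : {ffun gT -> gT}), F P f -> {in P, f =1 g} -> F P g),
      (forall P s, group_set P -> P \subset S -> s \in S -> F P (conjf s)),
      (forall P Q (f g : {ffun gT -> gT}), F P f -> F Q g -> f @: P \subset Q -> F P (compf g f)) &
      (forall P f, F P f ->
         exists g : {ffun gT -> gT}, F (f @: P) g /\ {in P, forall x, g (f x) = x})].

Definition sub_fsys (F' F : fsys) : Prop := forall P f, F' P f -> F P f.

Definition generated_fsys (S : {set gT}) (F1 F2 F : fsys) : Prop :=
  [/\ is_fusion_system S F, sub_fsys F1 F, sub_fsys F2 F &
      forall G, is_fusion_system S G -> sub_fsys F1 G -> sub_fsys F2 G ->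
        sub_fsys F G].

Definition homset (F : fsys) (P T : {set gT}) : {set {ffun gT -> gT}} :=
  [set f | F P f & f @: P \subset T].

Definition fiso (F : fsys) (P Q : {set gT}) : bool :=
  [exists f : {ffun gT -> gT}, F P f && (f @: P == Q)].

Definition family_closed (S : {set gT}) (F : fsys) (C : {set {set gT}}) : Prop :=
  [/\ (forall Q, Q \in C -> group_set Q && (Q \subset S)),
      (forall Q f, Q \in C -> F Q f -> f @: Q \in C) &
      (forall Q R, Q \in C -> group_set R -> Q \subset R -> R \subset S ->
         R \in C)].

Definition rep_rel (H : fsys) (P : {set gT}) (f g : {ffun gT -> gT}) : bool :=
  [exists th : {ffun gT -> gT},
     [&& H (f @: P) th, th @: (f @: P) == g @: P &
         [forall x in P, th (f x) == g x]]].

Definition rep_class (F H : fsys) (P SH : {set gT}) (f : {ffun gT -> gT}) :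
  {set {ffun gT -> gT}} := [set g in homset F P SH | rep_rel H P f g].

Definition Rep (F H : fsys) (P SH : {set gT}) : {set {set {ffun gT -> gT}}} :=
  [set rep_class F H P SH f | f in homset F P SH].

(* The bipartite graph Rep_F(P, Lambda): vertices Rep_F(P,F1) (tagged inl)
   and Rep_F(P,F2) (tagged inr); edges Rep_F(P,Fe); the edge [phi]_Fe joins
   [phi]_F2 and [iota phi]_F1 (iota phi is the same function as phi). *)
Definition RepV (F F1 F2 : fsys) (P S S' : {set gT}) :
  {set ({set {ffun gT -> gT}} + {set {ffun gT -> gT}})} :=
  inl @: Rep F F1 P S :|: inr @: Rep F F2 P S'.

Definition RepE (F Fe : fsys) (P S' : {set gT}) := Rep F Fe P S'.

Definition erep (e : {set {ffun gT -> gT}}) : {ffun gT -> gT} :=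
  odflt [ffun x => x] [pick f in e].

Definition Rep_src (F F2 : fsys) (P S' : {set gT}) (e : {set {ffun gT -> gT}}) :
  ({set {ffun gT -> gT}} + {set {ffun gT -> gT}}) :=
  inr (rep_class F F2 P S' (erep e)).

Definition Rep_tgt (F F1 : fsys) (P S : {set gT}) (e : {set {ffun gT -> gT}}) :
  ({set {ffun gT -> gT}} + {set {ffun gT -> gT}}) :=
  inl (rep_class F F1 P S (erep e)).

End Fusion.

Section Graph.
Variables (V E : finType) (VS : {set V}) (ES : {set E}) (src tgt : E -> V).

Definition joins (e : E) (u v : V) : bool :=
  ((src e == u) && (tgt e == v)) || ((src e == v) && (tgt e == u)).

(* walk u es vs : starting at u, traverse edges es, visiting successively
   the vertices vs (so the walk ends at last u vs). *)
Fixpoint walk (u : V) (es : seq E) (vs : seq V) : bool :=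
  match es, vs with
  | [::], [::] => true
  | e :: es', v :: vs' => [&& e \in ES, joins e u v & walk v es' vs']
  | _, _ => false
  end.

Definition gconnected : Prop :=
  forall u v, u \in VS -> v \in VS ->
    exists es vs, walk u es vs && (last u vs == v).

(* a cycle: a closed walk of length >= 1 with pairwise distinct edges and
   pairwise distinct vertices (loops and multiple edges count as cycles) *)
Definition has_cycle : Prop :=
  exists u es vs, [&& es != [::], walk u es vs, last u vs == u, uniq es & uniq vs].

Definition is_tree : Prop := VS != set0 /\ gconnected /\ ~ has_cycle.

(* H_1(graph; R) = 0, i.e. the boundary map R^ES -> R^VS,
   e |-> tgt e - src e, has trivial kernel (no 2-cells). *)
Definition H1_trivial (R : comPzRingType) : Prop :=
  forall c : {ffun E -> R},
    (forall e, e \notin ES -> c e = 0%R) ->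
    (forall v, (\sum_(e in ES | tgt e == v) c e - \sum_(e in ES | src e == v) c e = 0)%R) ->
    c = 0%R.

End Graph.

(* Main.v *)
Require Import Defs.
From Stdlib Require Import ClassicalEpsilon.
From mathcomp Require Import all_boot all_order all_algebra all_fingroup all_solvable.
Set Implicit Arguments. Unset Strict Implicit. Unset Printing Implicit Defensive.
Import GRing.Theory.

Lemma walk_size (V E : finType) (ES : {set E}) (src tgt : E -> V) u es vs :
  walk ES src tgt u es vs -> size es = size vs.
Proof.
elim: es u vs => [|e es IH] u [|v vs] //= /and3P [_ _ /IH] ->. by [].
Qed.

Lemma walk_cat (V E : finType) (ES : {set E}) (src tgt : E -> V) u es1 vs1 es2 vs2 :
  size es1 = size vs1 ->
  walk ES src tgt u (es1 ++ es2) (vs1 ++ vs2) =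
  walk ES src tgt u es1 vs1 && walk ES src tgt (last u vs1) es2 vs2.
Proof.
elim: es1 u vs1 => [|e es IH] u [|v vs] //= [] /IH ->. by rewrite !andbA.
Qed.

Lemma walk_rcons (V E : finType) (ES : {set E}) (src tgt : E -> V) u es vs e v :
  size es = size vs ->
  walk ES src tgt u (rcons es e) (rcons vs v) =
  [&& walk ES src tgt u es vs, e \in ES & joins src tgt e (last u vs) v].
Proof.
move=> h; rewrite -!cats1 walk_cat //=. by rewrite andbT.
Qed.

Lemma joinsC (V E : finType) (src tgt : E -> V) e u v :
  joins src tgt e u v = joins src tgt e v u.
Proof. by rewrite /joins orbC. Qed.

Definition cyc (V E : finType) (ES : {set E}) (src tgt : E -> V) u es vs :=
  [&& es != [::], walk ES src tgt u es vs, last u vs == u, uniq es & uniq vs].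

Lemma cyc_rot (V E : finType) (ES : {set E}) (src tgt : E -> V) u e es v vs :
  cyc ES src tgt u (e :: es) (v :: vs) ->
  cyc ES src tgt v (rcons es e) (rcons vs v).
Proof.
case/and5P=> _ /= /and3P [eE jn w] /eqP lst /andP [ne ue] /andP [nv uv].
have sz := walk_size w.
apply/and5P; split.
- by rewrite -size_eq0 size_rcons.
- rewrite walk_rcons // w eE /=; move: lst => /= ->; by rewrite joinsC in jn *.
- by rewrite last_rcons.
- by rewrite rcons_uniq ne ue.
- by rewrite rcons_uniq nv uv.
Qed.

Section NoCycle.
Variables (A B E : finType) (ES : {set E}) (s : E -> B) (t : E -> A).
Let src := fun e => (inr (s e) : A + B).
Let tgt := fun e => (inl (t e) : A + B).
Hypothesis U1 : forall e e', e \in ES -> e' \in ES -> s e = s e' -> t e = t e' -> e = e'.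
Hypothesis U2 : forall e1 e2 e3 e4, e1 \in ES -> e2 \in ES -> e3 \in ES -> e4 \in ES ->
  s e1 = s e2 -> e1 <> e2 -> s e3 = s e4 -> e3 <> e4 -> s e1 = s e3.

Lemma joins_inr e b v : joins src tgt e (inr b) v -> s e = b /\ v = inl (t e).
Proof.
rewrite /joins /src /tgt; case/orP=> /andP [/eqP h1 /eqP h2]; last by [].
by case: h1 => ->; rewrite h2.
Qed.

Lemma joins_inl e a v : joins src tgt e (inl a) v -> t e = a /\ v = inr (s e).
Proof.
rewrite /joins /src /tgt; case/orP=> /andP [/eqP h1 /eqP h2]; first by [].
by case: h2 => ->; rewrite h1.
Qed.

Lemma cycA b es vs : cyc ES src tgt (inr b) es vs ->
  exists b' e e' es' vs', [/\ e \in ES, e' \in ES, s e = b', s e' = b' & e <> e'] /\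
     b' <> b /\ cyc ES src tgt (inr b') es' vs'.
Proof.
move=> C0; have C := C0.
case/and5P: C => nz w /eqP lst ues uvs.
case: es vs nz w lst ues uvs C0 => [|e1 es] [|v1 vs] //= _.
case/and3P=> e1E /joins_inr [s1 ->] w.
case: es vs w => [|e2 es] [|v2 vs] //=.
case/and3P=> e2E /joins_inl [t2 ->] w.
case: es vs w => [|e3 es] [|v3 vs] //=.
  move=> _ [s2] ue; exfalso; move: ue; rewrite !inE andbT => /negP []; apply/eqP.
  by apply: U1 => //; congruence.
case/and3P=> e3E /joins_inr [s3 ->] w lst.
case/andP=> _ /andP [ne23 _] /andP [_ /andP [nv2 _]] C0.
exists (s e2), e2, e3, (rcons (rcons (e3 :: es) e1) e2), (rcons (rcons (inl (t e3) :: vs) (inl (t e1))) (inr (s e2))).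
split; first split => //; first by move=> h; rewrite h inE eqxx in ne23.
split; last exact: (cyc_rot (cyc_rot C0)).
move=> hb; rewrite hb in nv2.
by move: nv2; rewrite -lst /= mem_last.
Qed.

Lemma no_cycle : ~ has_cycle ES src tgt.
Proof.
case=> u [es [vs C]].
have [b [es1 [vs1 Cb]]] : exists b es1 vs1, cyc ES src tgt (inr b) es1 vs1.
  case: u C => [a|b] C; last by exists b, es, vs.
  case/and5P: (C) => nz w _ _ _.
  case: es vs C nz w => [|e es] [|v vs] //= C _ /and3P [_ /joins_inl [_ hv] _]; rewrite hv in C.
  by exists (s e), (rcons es e), (rcons vs (inr (s e))); exact: (cyc_rot C).
have [b1 [e [e' [es2 [vs2 [[eE e'E se se' ne] [nb Cb1]]]]]]] := cycA Cb.
have [b2 [f [f' [es3 [vs3 [[fE f'E sf sf' nf] [nb2 _]]]]]]] := cycA Cb1.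
apply: nb2; rewrite -se -sf; apply: (U2 fE f'E eE e'E) => //; congruence.
Qed.

Lemma H1_ok (R : comPzRingType) : H1_trivial ES src tgt R.
Proof.
move=> c c0 cv.
have nb : forall e, e \in ES -> (forall e', e' \in ES -> s e' = s e -> e' = e) -> c e = 0%R.
  move=> e eE h; have := cv (src e).
  rewrite [X in (X - _)%R]big1; last by move=> x /andP [_ /eqP]; rewrite /tgt /src.
  rewrite (bigD1 e) /=; last by rewrite eE eqxx.
  rewrite big1 ?addr0 ?sub0r; first by move/eqP; rewrite oppr_eq0 => /eqP.
  move=> x /andP [/andP [xE /eqP [sx]] nx]; move: nx; by rewrite (h x xE sx) eqxx.
apply/ffunP=> e; rewrite ffunE.
case eE : (e \in ES); last by apply: c0; rewrite eE.
case: (boolP [exists e', [&& e' \in ES, e' != e & s e' == s e]]); last first.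
  rewrite negb_exists => /forallP h; apply: nb => // e' e'E se.
  have := h e'; rewrite e'E se eqxx andbT /= negbK; by move/eqP.
case/existsP=> e2 /and3P [e2E ne2 /eqP s2].
have := cv (tgt e).
rewrite [X in (_ - X)%R]big1; last by move=> x /andP [_ /eqP]; rewrite /tgt /src.
rewrite subr0 (bigD1 e) /=; last by rewrite eE eqxx.
rewrite big1 ?addr0 //.
move=> x /andP [/andP [xE /eqP [tx]] nx]; apply: nb => // e' e'E se'.
apply/eqP; apply: contraNT nx => ne'.
apply/eqP; apply: U1 => //.
rewrite -se'; symmetry.
rewrite -s2; apply: (U2 e2E eE e'E xE) => //; by apply/eqP.
Qed.

End NoCycle.

Section Basics.
Variable gT : finGroupType.
Implicit Types (P Q R X : {set gT}) (f g k th : {ffun gT -> gT}).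

Lemma conjf1E x : conjf (1%g : gT) x = x.
Proof. by rewrite /conjf ffunE conjg1. Qed.

Lemma compfE g f x : compf g f x = g (f x).
Proof. by rewrite /compf ffunE. Qed.

Lemma imset_compf g f P : compf g f @: P = g @: (f @: P).
Proof. rewrite -imset_comp; apply: eq_imset => x; by rewrite compfE. Qed.

Lemma imset_conjf1 P : conjf (1%g : gT) @: P = P.
Proof. by rewrite (eq_imset _ conjf1E) imset_id. Qed.

Lemma imset_inv f g P : {in P, forall x, g (f x) = x} -> g @: (f @: P) = P.
Proof. move=> h; rewrite -imset_comp (eq_in_imset (g := id)) ?imset_id //. Qed.

Lemma imset_rel f g th P : {in P, forall x, th (f x) = g x} -> th @: (f @: P) = g @: P.
Proof. move=> h; rewrite -imset_comp; exact: eq_in_imset. Qed.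

Variables (SH : {set gT}) (H : fsys gT).
Hypothesis HH : is_fusion_system SH H.

Lemma fs_dom P f : H P f -> group_set P /\ P \subset SH.
Proof. by case: HH => h _ _ _ _ /h [] . Qed.

Lemma fs_img P f : H P f -> f @: P \subset SH.
Proof. by case: HH => h _ _ _ _ /h []. Qed.

Lemma fs_ext P f g : H P f -> {in P, f =1 g} -> H P g.
Proof. by case: HH => _ h _ _ _; apply: h. Qed.

Lemma fs_id P : group_set P -> P \subset SH -> H P (conjf (1%g : gT)).
Proof. by case: HH => _ _ h _ _ gP sP; apply: h => //; apply: (subsetP sP); case/andP: gP. Qed.

Lemma fs_comp P Q f g : H P f -> H Q g -> f @: P \subset Q -> H P (compf g f).
Proof. by case: HH => _ _ _ h _; apply: h. Qed.

Lemma fs_inv P f : H P f -> exists g, H (f @: P) g /\ {in P, forall x, g (f x) = x}.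
Proof. by case: HH => _ _ _ _ h; apply: h. Qed.

Lemma fs_imgg P f : H P f -> group_set (f @: P).
Proof. by case/fs_inv=> g [/fs_dom []]. Qed.

Lemma fs_restr R Q f : H R f -> group_set Q -> Q \subset R -> H Q f.
Proof.
move=> Hf gQ QR; have [_ RS] := fs_dom Hf.
have := fs_comp (fs_id gQ (subset_trans QR RS)) Hf; rewrite imset_conjf1 => /(_ QR) h.
by apply: fs_ext h _ => x _; rewrite compfE conjf1E.
Qed.

Lemma rel_intro P f g th : H (f @: P) th -> {in P, forall x, th (f x) = g x} ->
  rep_rel H P f g.
Proof.
move=> Hth h; apply/existsP; exists th; rewrite Hth /= (imset_rel h) eqxx /=.
by apply/forall_inP => x xP; rewrite h.
Qed.

Lemma rel_elim P f g : rep_rel H P f g ->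
  exists th, [/\ H (f @: P) th, {in P, forall x, th (f x) = g x} & th @: (f @: P) = g @: P].
Proof.
case/existsP=> th /and3P [Hth /eqP im /forall_inP h].
by exists th; split => // x xP; apply/eqP; apply: h.
Qed.

Lemma rel_refl P f : group_set (f @: P) -> f @: P \subset SH -> rep_rel H P f f.
Proof. move=> g s; apply: (rel_intro (fs_id g s)) => x _; exact: conjf1E. Qed.

Lemma rel_sym P f g : rep_rel H P f g -> rep_rel H P g f.
Proof.
case/rel_elim=> th [Hth h im].
have [th' [Hth' h']] := fs_inv Hth.
rewrite im in Hth'; apply: (rel_intro Hth') => x xP.
by rewrite -h // h' // imset_f.
Qed.

Lemma rel_trans P f g k : rep_rel H P f g -> rep_rel H P g k -> rep_rel H P f k.
Proof.
case/rel_elim=> th1 [H1 h1 im1]; case/rel_elim=> th2 [H2 h2 im2].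
have Hc := fs_comp H1 H2; rewrite im1 subxx in Hc; have {}Hc := Hc isT.
by apply: (rel_intro Hc) => x xP; rewrite compfE h1 // h2.
Qed.

End Basics.

Lemma rel_src_ext (gT : finGroupType) (H : fsys gT) (P : {set gT}) (f f' g : {ffun gT -> gT}) :
  {in P, f =1 f'} -> rep_rel H P f g = rep_rel H P f' g.
Proof.
move=> e; rewrite /rep_rel (eq_in_imset e).
apply: eq_existsb => th; congr [&& _, _ & _].
by apply: eq_forallb_in => x xP; rewrite e.
Qed.

Lemma class_ext (gT : finGroupType) (F H : fsys gT) (P X : {set gT}) (f f' : {ffun gT -> gT}) :
  {in P, f =1 f'} -> rep_class F H P X f = rep_class F H P X f'.
Proof. by move=> e; apply/setP => k; rewrite !inE (rel_src_ext _ _ e). Qed.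

Section Classes.
Variables (gT : finGroupType) (SH S0 : {set gT}) (H F : fsys gT).
Implicit Types (P Q R X : {set gT}) (f g k th : {ffun gT -> gT}).
Hypothesis HH : is_fusion_system SH H.
Hypothesis HF : is_fusion_system S0 F.

Lemma class_eq P X f g : rep_rel H P f g -> rep_class F H P X f = rep_class F H P X g.
Proof.
move=> r; apply/setP => k; rewrite !inE; congr andb; apply/idP/idP => h.
- exact: (rel_trans HH (rel_sym HH r)).
- exact: (rel_trans HH r).
Qed.

Lemma rel_refl_hom P X f : X \subset SH -> f \in homset F P X -> rep_rel H P f f.
Proof.
move=> XS; rewrite inE => /andP [Ff fX].
apply: (rel_refl HH (fs_imgg HF Ff)); exact: subset_trans fX XS.
Qed.

Lemma class_rel P X f g : X \subset SH -> g \in homset F P X ->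
  rep_class F H P X f = rep_class F H P X g -> rep_rel H P f g.
Proof.
move=> XS gh E.
have : g \in rep_class F H P X g by rewrite inE gh (rel_refl_hom XS gh).
by rewrite -E inE => /andP [_ ->].
Qed.

Lemma erep_spec P X e : X \subset SH -> e \in Rep F H P X ->
  erep e \in homset F P X /\ e = rep_class F H P X (erep e).
Proof.
move=> XS /imsetP [f fh ->]; rewrite /erep.
case: pickP => [k | none] /=.
- rewrite inE => /andP [kh r]; split => //; exact: class_eq.
- by have := none f; rewrite inE fh (rel_refl_hom XS fh).
Qed.

Lemma both_in P f f' : H P f -> H P f' -> rep_rel H P f f'.
Proof.
move=> Hf Hf'; have [g [Hg hg]] := fs_inv HH Hf.
have Hc := fs_comp HH Hg Hf'; rewrite imset_inv // subxx in Hc.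
by apply: (rel_intro (Hc isT)) => x xP; rewrite compfE hg.
Qed.

End Classes.

Definition asb (A : Prop) : bool := if excluded_middle_informative A then true else false.
Lemma asbP (A : Prop) : reflect A (asb A).
Proof. by rewrite /asb; case: excluded_middle_informative => h; constructor. Qed.

Lemma rel_sub (gT : finGroupType) (H H' : fsys gT) (P : {set gT}) f g :
  sub_fsys H' H -> rep_rel H' P f g -> rep_rel H P f g.
Proof.
move=> sH /existsP [th /and3P [a b c]]; apply/existsP; exists th.
by rewrite (sH _ _ a) b c.
Qed.

Section Conn.
Variables (V E : finType) (ES : {set E}) (src tgt : E -> V).
Definition conn u v := exists es vs, walk ES src tgt u es vs && (last u vs == v).
Lemma conn_refl u : conn u u.
Proof. by exists [::], [::]; rewrite /= eqxx. Qed.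
Lemma conn_trans u v w : conn u v -> conn v w -> conn u w.
Proof.
case=> es1 [vs1 /andP [w1 /eqP l1]] [es2 [vs2 /andP [w2 /eqP l2]]].
exists (es1 ++ es2), (vs1 ++ vs2).
by rewrite walk_cat ?(walk_size w1) // w1 l1 w2 last_cat l1 l2 eqxx.
Qed.
Lemma conn_edge e u v : e \in ES -> joins src tgt e u v -> conn u v.
Proof. by move=> eE j; exists [:: e], [:: v]; rewrite /= eE j eqxx. Qed.
End Conn.

Section Main.
Variables (gT : finGroupType) (S S' : {group gT}) (F1 F2 Fe F : fsys gT) (P : {set gT}).
Implicit Types (Q R X : {set gT}) (f g k th : {ffun gT -> gT}).
Hypotheses (SS : S' \subset S) (HF1 : is_fusion_system S F1) (HF2 : is_fusion_system S' F2)
 (HFe : is_fusion_system S' Fe) (eF1 : sub_fsys Fe F1) (eF2 : sub_fsys Fe F2)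
 (Gen : generated_fsys S F1 F2 F) (gP : group_set P) (PS : P \subset S).
Hypothesis Hyp : forall Q, fiso F P Q -> homset Fe Q S' = homset F1 Q S' :&: homset F2 Q S'.

Lemma HF : is_fusion_system S F. Proof. by case: Gen. Qed.
Lemma F1F : sub_fsys F1 F. Proof. by case: Gen. Qed.
Lemma F2F : sub_fsys F2 F. Proof. by case: Gen. Qed.
Lemma FeF : sub_fsys Fe F. Proof. by move=> Q f /eF1 /F1F. Qed.

Local Notation ES := (Rep F Fe P S').
Local Notation src := (Rep_src F F2 P S').
Local Notation tgt := (Rep_tgt F F1 P S).
Local Notation s2 f := (rep_class F F2 P S' f).
Local Notation t1 f := (rep_class F F1 P S f).
Local Notation ce f := (rep_class F Fe P S' f).

Lemma homS' f : f \in homset F P S' -> f \in homset F P S.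
Proof. by rewrite !inE => /andP [-> h]; exact: subset_trans h SS. Qed.

Lemma edge_spec e : e \in ES -> erep e \in homset F P S' /\ e = ce (erep e).
Proof. exact: (erep_spec HFe HF (subxx _)). Qed.

Lemma edge_of f : f \in homset F P S' ->
  [/\ ce f \in ES, src (ce f) = inr (s2 f) & tgt (ce f) = inl (t1 f)].
Proof.
move=> fh; have eE : ce f \in ES by apply: imset_f.
have [h1 h2] := edge_spec eE.
have r : rep_rel Fe P f (erep (ce f)) := class_rel HFe HF (subxx _) h1 h2.
split => //; rewrite /Rep_src /Rep_tgt.
- by congr inr; symmetry; apply: (class_eq F HF2); apply: rel_sub eF2 r.
- by congr inl; symmetry; apply: (class_eq F HF1); apply: rel_sub eF1 r.
Qed.

Lemma L3 f f' : f \in homset F P S' -> f' \in homset F P S' ->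
  rep_rel F1 P f f' -> rep_rel F2 P f f' -> rep_rel Fe P f f'.
Proof.
rewrite !inE => /andP [Ff fS] /andP [Ff' f'S] r1 r2.
have [th1 [H1 h1 _]] := rel_elim r1.
have [th2 [H2 h2 im2]] := rel_elim r2.
have H12 : F1 (f @: P) th2.
  apply: (fs_ext HF1 H1) => _ /imsetP [x xP ->]; by rewrite h1 // h2.
have : th2 \in homset Fe (f @: P) S'.
  rewrite Hyp; last by apply/existsP; exists f; rewrite Ff eqxx.
  by rewrite !inE H12 H2 im2 f'S.
rewrite inE => /andP [He _]; exact: rel_intro He h2.
Qed.

Lemma U1M e e' : e \in ES -> e' \in ES ->
  s2 (erep e) = s2 (erep e') -> t1 (erep e) = t1 (erep e') -> e = e'.
Proof.
move=> eE e'E es et.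
have [h1 d1] := edge_spec eE; have [h2 d2] := edge_spec e'E.
have r2 := class_rel HF2 HF (subxx _) h2 es.
have r1 := class_rel HF1 HF (subxx _) (homS' h2) et.
by rewrite d1 d2; apply: (class_eq F HFe); apply: L3.
Qed.

Lemma U2_1a (h : homset F P S' = homset F1 P S') e e' : e \in ES -> e' \in ES ->
  s2 (erep e) = s2 (erep e') -> e = e'.
Proof.
move=> eE e'E es.
have [h1 d1] := edge_spec eE; have [h2 d2] := edge_spec e'E.
have r2 := class_rel HF2 HF (subxx _) h2 es.
move: (h1) (h2); rewrite h !inE => /andP [F1a _] /andP [F1b _].
have r1 := both_in HF1 F1a F1b.
by rewrite d1 d2; apply: (class_eq F HFe); apply: L3.
Qed.

Lemma U2_1b (h : homset F P S' = homset F2 P S') e e' : e \in ES -> e' \in ES ->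
  s2 (erep e) = s2 (erep e').
Proof.
move=> eE e'E; have [h1 _] := edge_spec eE; have [h2 _] := edge_spec e'E.
move: h1 h2; rewrite h !inE => /andP [a _] /andP [b _].
apply: (class_eq F HF2). exact: (both_in HF2 a b).
Qed.

Lemma K (hA : homset F P P = homset F2 P P)
  (hB : forall Q, fiso F P Q -> ~~ fiso Fe P Q -> homset Fe Q S' = homset F2 Q S')
  e e' : e \in ES -> e' \in ES -> s2 (erep e) = s2 (erep e') -> e <> e' -> F2 P (erep e).
Proof.
move=> eE e'E es ne.
have [h1 d1] := edge_spec eE; have [h2 d2] := edge_spec e'E.
have r2 := class_rel HF2 HF (subxx _) h2 es.
move: (h1); rewrite inE => /andP [Ff fS].
have fi : fiso F P (erep e @: P) by apply/existsP; exists (erep e); rewrite Ff eqxx.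
case: (boolP (fiso Fe P (erep e @: P))) => [/existsP [ga /andP [Fga /eqP gaP]] | nfi].
  have [gi [Fgi hgi]] := fs_inv HFe Fga.
  rewrite gaP in Fgi.
  have Fal := fs_comp HF Ff (FeF Fgi) (subxx _).
  have alP : compf gi (erep e) @: P = P by rewrite imset_compf -gaP imset_inv.
  have : compf gi (erep e) \in homset F P P by rewrite inE Fal alP subxx.
  rewrite hA inE => /andP [F2al _].
  have := fs_comp HF2 F2al (eF2 Fga); rewrite alP subxx => /(_ isT) Hc.
  apply: (fs_ext HF2 Hc) => x xP.
  have : erep e x \in ga @: P by rewrite gaP imset_f.
  by case/imsetP=> z zP fz; rewrite !compfE fz hgi.
exfalso; apply: ne.
have [th [Hth hth im]] := rel_elim r2.
have : th \in homset Fe (erep e @: P) S'.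
  by rewrite hB // inE Hth im; move: h2; rewrite inE => /andP [_ ->].
rewrite inE => /andP [He _].
rewrite d1 d2; apply: (class_eq F HFe); exact: rel_intro He hth.
Qed.

Hypothesis Cs : ((homset F P S' = homset F1 P S' \/ homset F P S' = homset F2 P S') \/
   (homset F P P = homset F2 P P /\
    forall Q, fiso F P Q -> ~~ fiso Fe P Q -> homset Fe Q S' = homset F2 Q S')).

Lemma U2M e1 e2 e3 e4 : e1 \in ES -> e2 \in ES -> e3 \in ES -> e4 \in ES ->
  s2 (erep e1) = s2 (erep e2) -> e1 <> e2 -> s2 (erep e3) = s2 (erep e4) -> e3 <> e4 ->
  s2 (erep e1) = s2 (erep e3).
Proof.
move=> E1 E2 E3 E4 s12 n12 s34 n34.
case: Cs => [[h|h]|[hA hB]].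
- by exfalso; apply: n12; apply: U2_1a.
- exact: U2_1b.
- have a := K hA hB E1 E2 s12 n12; have b := K hA hB E3 E4 s34 n34.
  apply: (class_eq F HF2); exact: (both_in HF2 a b).
Qed.

Local Notation cn := (conn ES src tgt).

Definition Gs : fsys gT := fun R f => asb (F R f /\ forall chi, F P chi -> chi @: P \subset R ->
   cn (inl (t1 chi)) (inl (t1 (compf f chi))) /\ cn (inl (t1 (compf f chi))) (inl (t1 chi))).

Lemma G_F1 : sub_fsys F1 Gs.
Proof.
move=> R f F1f; apply/asbP; split; first exact: F1F.
move=> chi Fchi sub.
have gi := fs_imgg HF Fchi.
have F1r := fs_restr HF1 F1f gi sub.
have r : rep_rel F1 P chi (compf f chi) by apply: rel_intro F1r _ => x _; rewrite compfE.
by rewrite (class_eq F HF1 S r); split; apply: conn_refl.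
Qed.

Lemma G_F2 : sub_fsys F2 Gs.
Proof.
move=> R f F2f; apply/asbP; split; first exact: F2F.
move=> chi Fchi sub.
have [_ RS'] := fs_dom HF2 F2f.
have ch : chi \in homset F P S' by rewrite inE Fchi (subset_trans sub RS').
have Ffc : F P (compf f chi) := fs_comp HF Fchi (F2F F2f) sub.
have fch : compf f chi \in homset F P S'.
  rewrite inE Ffc imset_compf /=; apply: subset_trans (fs_img HF2 F2f); exact: imsetS.
have F2r := fs_restr HF2 F2f (fs_imgg HF Fchi) sub.
have r : rep_rel F2 P chi (compf f chi) by apply: rel_intro F2r _ => x _; rewrite compfE.
have [E1 s1 t1'] := edge_of ch; have [E2 s2' t2'] := edge_of fch.
have eqs : s2 chi = s2 (compf f chi) := class_eq F HF2 S' r.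
have c1 : cn (inl (t1 chi)) (inr (s2 chi)).
  by apply: (conn_edge E1); rewrite /joins s1 t1' !eqxx orbT.
have c1' : cn (inr (s2 chi)) (inl (t1 chi)).
  by apply: (conn_edge E1); rewrite /joins s1 t1' !eqxx.
have c2 : cn (inl (t1 (compf f chi))) (inr (s2 (compf f chi))).
  by apply: (conn_edge E2); rewrite /joins s2' t2' !eqxx orbT.
have c2' : cn (inr (s2 (compf f chi))) (inl (t1 (compf f chi))).
  by apply: (conn_edge E2); rewrite /joins s2' t2' !eqxx.
rewrite -eqs in c2 c2'.
split; [exact: conn_trans c1 c2' | exact: conn_trans c2 c1'].
Qed.

Lemma G_fs : is_fusion_system S Gs.
Proof.
split.
- move=> R f /asbP [Ff _]; by case: HF => h _ _ _ _; apply: h.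
- move=> R f g /asbP [Ff hf] e; apply/asbP; split; first exact (fs_ext HF Ff e).
  move=> chi Fchi sub; have eq : t1 (compf g chi) = t1 (compf f chi).
    apply: class_ext => x xP; rewrite !compfE; symmetry; apply: e.
    apply: (subsetP sub); exact: imset_f.
  rewrite eq; exact: hf.
- move=> R s gR RS sS; apply: G_F1; by case: HF1 => _ _ h _ _; apply: h.
- move=> R Q f g /asbP [Ff hf] /asbP [Fg hg] sub; apply/asbP; split.
    exact (fs_comp HF Ff Fg sub).
  move=> chi Fchi sub2.
  have [a b] := hf chi Fchi sub2.
  have Ffc := fs_comp HF Fchi Ff sub2.
  have sub3 : compf f chi @: P \subset Q.
    by rewrite imset_compf; apply: subset_trans (imsetS _ sub2) sub.
  have [c d] := hg _ Ffc sub3.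
  have eq : compf g (compf f chi) = compf (compf g f) chi by apply/ffunP => x; rewrite !compfE.
  rewrite -eq; split; [exact: conn_trans a c | exact: conn_trans d b].
- move=> R f /asbP [Ff hf]; have [g [Fg hg]] := fs_inv HF Ff; exists g; split => //.
  apply/asbP; split => // chi Fchi sub.
  have Fgc := fs_comp HF Fchi Fg sub.
  have sub2 : compf g chi @: P \subset R.
    by rewrite imset_compf -(imset_inv hg); exact: imsetS.
  have [a b] := hf _ Fgc sub2.
  have eq : t1 (compf f (compf g chi)) = t1 chi.
    apply: class_ext => x xP; rewrite !compfE.
    have : chi x \in f @: R by apply: (subsetP sub); exact: imset_f.
    by case/imsetP => y yR ->; rewrite hg.
  rewrite eq in a b; split; [exact b | exact a].
Qed.

Lemma F_G : sub_fsys F Gs.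
Proof. by case: Gen => _ _ _ h; apply: h G_fs G_F1 G_F2. Qed.

Local Notation idf := (conjf (1%g : gT)).

Lemma FP_id : F P idf.
Proof. exact (fs_id HF gP PS). Qed.

Lemma hub_conn f : f \in homset F P S ->
  cn (inl (t1 idf)) (inl (t1 f)) /\ cn (inl (t1 f)) (inl (t1 idf)).
Proof.
rewrite inE => /andP [Ff _]; have /asbP [_ h] := F_G Ff.
have sub0 : idf @: P \subset P by rewrite imset_conjf1 subxx.
have [a b] := h idf FP_id sub0.
have eq : t1 (compf f idf) = t1 f by apply: class_ext => x _; rewrite compfE conjf1E.
by rewrite eq in a b.
Qed.

Lemma vert_conn u : u \in RepV F F1 F2 P S S' ->
  cn (inl (t1 idf)) u /\ cn u (inl (t1 idf)).
Proof.
rewrite /RepV inE => /orP [/imsetP [c /imsetP [f fh ->] ->] | /imsetP [c /imsetP [f fh ->] ->]].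
  exact: hub_conn.
have [E1 s1 t1'] := edge_of fh.
have [a b] := hub_conn (homS' fh).
have c1 : cn (inl (t1 f)) (inr (s2 f)).
  by apply: (conn_edge E1); rewrite /joins s1 t1' !eqxx orbT.
have c1' : cn (inr (s2 f)) (inl (t1 f)).
  by apply: (conn_edge E1); rewrite /joins s1 t1' !eqxx.
split; [exact: conn_trans a c1 | exact: conn_trans c1' b].
Qed.

Lemma main_tree : is_tree (RepV F F1 F2 P S S') ES src tgt.
Proof.
split.
  apply/set0Pn; exists (inl (t1 idf)); rewrite inE; apply/orP; left.
  apply: imset_f; apply: imset_f; by rewrite inE FP_id imset_conjf1 PS.
split.
  move=> u v uV vV; have [_ a] := vert_conn uV; have [b _] := vert_conn vV.
  exact: conn_trans a b.
exact: (no_cycle (s := fun e => s2 (erep e)) (t := fun e => t1 (erep e)) U1M U2M).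
Qed.

Lemma main_H1 (R : comPzRingType) : H1_trivial ES src tgt R.
Proof.
have h := H1_ok (s := fun e => s2 (erep e)) (t := fun e => t1 (erep e)) U1M U2M.
exact: h.
Qed.

End Main.

Theorem lemma4p1 (gT : finGroupType) (p : nat) (S S' : {group gT})
  (F1 F2 Fe F : fsys gT) (C : {set {set gT}}) (P : {set gT}) :
  prime p -> (p.-group S)%g -> S' \subset S ->
  is_fusion_system S F1 -> is_fusion_system S' F2 -> is_fusion_system S' Fe ->
  sub_fsys Fe F1 -> sub_fsys Fe F2 ->
  generated_fsys S F1 F2 F ->
  family_closed S F C -> gval S' \in C ->
  P \in C ->
  (forall Q, fiso F P Q ->
     homset Fe Q S' = homset F1 Q S' :&: homset F2 Q S') ->
  ((homset F P S' = homset F1 P S' \/ homset F P S' = homset F2 P S') \/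
   (homset F P P = homset F2 P P /\
    forall Q, fiso F P Q -> ~~ fiso Fe P Q -> homset Fe Q S' = homset F2 Q S')) ->
  is_tree (RepV F F1 F2 P S S') (RepE F Fe P S')
          (Rep_src F F2 P S') (Rep_tgt F F1 P S) /\
  (forall R : comPzRingType,
     H1_trivial (RepE F Fe P S') (Rep_src F F2 P S') (Rep_tgt F F1 P S) R).
Proof.
move=> pr pS SS HF1 HF2 HFe eF1 eF2 Gen FC S'C PC Hyp Cs.
have [gP PS] : group_set P /\ P \subset S by case: FC => h _ _; apply/andP; apply: h.
split.
- by eapply main_tree; eassumption.
- by move=> R; eapply main_H1; eassumption.
Qed.
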